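(* Let $G$ be a graph, $k\ge1$ an integer, and $G_k$ the graph obtained from $G$ by cloning each vertex exactly $k-1$ times. Then, as polynomials, $$P(G_k;u,x)=P\big(G;u,(1+x)^k-1\big),$$ and consequently $$q(G_k;x,y)=q\Big(G;(x-1)\frac{y^k-1}{y-1}+1,\;y^k\Big).$$
   Context: All graphs are finite and undirected, without multiple edges but possibly with self loops. For $A\subseteq V$, $G[A]$ is the induced subgraph; $rk(G)$ is the $\mathbb{F}_2$-rank of the adjacency matrix $(m_{ij})$ ($m_{ij}=1$ iff $\{i,j\}\in E$; $m_{ii}=1$ iff $i$ has a self loop; empty graph: rank $0$). $q(G;x,y)=\sum_{A\subseteq V}(x-1)^{rk(G[A])}(y-1)^{|A|-rk(G[A])}$ and $P(G;u,x)=\sum_{A\subseteq V}x^{|A|}u^{rk(G[A])}$, with $0^0=1$; here $\frac{y^k-1}{y-1}=1+y+\dots+y^{k-1}$. The graph $G_k$ has vertex set $\{a_i: a\in V,\ 1\le i\le k\}$; for distinct $a,b\in V$, $a_i$ and $b_j$ are adjacent iff $\{a,b\}\in E$; $a_i,a_j$ are adjacent (for $i=j$: $a_i$ has a self loop) iff $a$ has a self loop in $G$. *)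

(* Defs.v *)
From HB Require Import structures.
From mathcomp Require Import all_boot all_order all_algebra.
Set Implicit Arguments. Unset Strict Implicit. Unset Printing Implicit Defensive.
Import GRing.Theory.
Local Open Scope ring_scope.

(* A graph on a finite vertex type T is an adjacency relation e : rel T,
   assumed symmetric (undirected); e a a means a has a self loop. *)

Definition adjmx (T : finType) (e : rel T) (A : {set T}) : 'M['F_2]_#|A| :=
  \matrix_(i < #|A|, j < #|A|)
     (e (@enum_val T (mem A) i) (@enum_val T (mem A) j))%:R.

Definition rk (T : finType) (e : rel T) (A : {set T}) : nat := \rank (adjmx e A).

Definition Pgraph (R : comPzRingType) (T : finType) (e : rel T) (u x : R) : R :=
  \sum_(A : {set T}) x ^+ #|A| * u ^+ rk e A.

Definition qgraph (R : comPzRingType) (T : finType) (e : rel T) (x y : R) : R :=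
  \sum_(A : {set T}) (x - 1) ^+ rk e A * (y - 1) ^+ (#|A| - rk e A)%N.

Definition clone (T : finType) (e : rel T) (k : nat) : rel (T * 'I_k)%type :=
  fun p q => if p.1 != q.1 then e p.1 q.1 else e p.1 p.1.
Arguments clone {T} e k.

(* Main.v *)
Require Import Defs.
From HB Require Import structures.
From mathcomp Require Import all_boot all_order all_algebra.
Import GRing.Theory.
Set Implicit Arguments. Unset Strict Implicit.
Local Open Scope ring_scope.

Lemma rank_mxsub (F : fieldType) m n (M : 'M[F]_m) (g : 'I_n -> 'I_m) :
  (\rank (mxsub g g M) <= \rank M)%N.
Proof.
have -> : mxsub g g M = rowsub g 1%:M *m (M *m colsub g 1%:M).
  by rewrite mulmx_colsub mulmx1 -mxsub_mul mul1mx.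
apply: leq_trans (mxrankM_maxr _ _) _.
exact: mxrankM_maxl.
Qed.

Definition toSet (T : finType) k (f : {ffun T -> {set 'I_k}}) : {set T * 'I_k} :=
  [set p | p.2 \in f p.1].
Definition ofSet (T : finType) k (B : {set T * 'I_k}) : {ffun T -> {set 'I_k}} :=
  [ffun a => [set i | (a, i) \in B]].
Definition supp (T : finType) k (f : {ffun T -> {set 'I_k}}) : {set T} :=
  [set a | f a != set0].

Lemma rk_clone (T : finType) (e : rel T) k (f : {ffun T -> {set 'I_k}}) :
  rk (clone e k) (toSet f) = rk e (supp f).
Proof.
set B := toSet f; set A := supp f.
have hB : forall i : 'I_#|B|, exists j : 'I_#|A|, enum_val j = (enum_val i).1.
  move=> i; have : enum_val i \in B := enum_valP i.
  rewrite inE => Hi.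
  have HA : (enum_val i).1 \in A by rewrite inE; apply/set0Pn; exists (enum_val i).2.
  by exists (enum_rank_in HA (enum_val i).1); rewrite enum_rankK_in.
have hA : forall j : 'I_#|A|, exists i : 'I_#|B|, (enum_val i).1 = enum_val j.
  move=> j; have : enum_val j \in A := enum_valP j.
  rewrite inE => /set0Pn [t Ht].
  have HB : (enum_val j, t) \in B by rewrite inE.
  by exists (enum_rank_in HB (enum_val j, t)); rewrite enum_rankK_in.
have [g Hg] := fin_all_exists hB.
have [h Hh] := fin_all_exists hA.
have E1 : adjmx (clone e k) B = mxsub g g (adjmx e A).
  apply/matrixP => i l; rewrite !mxE /clone !Hg.
  by case: ifP => [_|/negbFE/eqP->].
have E2 : adjmx e A = mxsub h h (adjmx (clone e k) B).
  apply/matrixP => i l; rewrite !mxE /clone !Hh.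
  by case: ifP => [_|/negbFE/eqP->].
rewrite /rk; apply/eqP; rewrite eqn_leq {1}E1 rank_mxsub /= {1}E2 rank_mxsub.
by [].
Qed.

Lemma card_toSet (T : finType) k (f : {ffun T -> {set 'I_k}}) :
  #|toSet f| = (\sum_a #|f a|)%N.
Proof.
transitivity (\sum_(p : T * 'I_k) (p.2 \in f p.1 : nat))%N.
  rewrite -sum1_card big_mkcond; apply: eq_bigr => p _; rewrite inE.
  by case: (_ \in _).
rewrite -(pair_big xpredT xpredT (fun a t => (t \in f a : nat))) /=.
apply: eq_bigr => a _; rewrite -sum1_card [in RHS]big_mkcond.
by apply: eq_bigr => t _; case: (_ \in _).
Qed.

Lemma reindex_sets (R : comPzRingType) (T : finType) k (W : {set T * 'I_k} -> R) :
  \sum_B W B = \sum_(f : {ffun T -> {set 'I_k}}) W (toSet f).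
Proof.
rewrite (reindex (@toSet T k)) //; apply: onW_bij.
exists (@ofSet T k) => [f|B].
  by apply/ffunP => a; apply/setP => i; rewrite ffunE !inE.
by apply/setP => [[a i]]; rewrite !inE ffunE inE.
Qed.

Lemma sum_clone (R : comPzRingType) (T : finType) k (F : {set T} -> R)
    (phi : nat -> R) :
  \sum_(f : {ffun T -> {set 'I_k}}) F (supp f) * \prod_(a in supp f) phi #|f a|
  = \sum_(A : {set T}) F A * (\sum_(S : {set 'I_k} | S != set0) phi #|S|) ^+ #|A|.
Proof.
rewrite (partition_big (@supp T k) xpredT) //=.
apply: eq_bigr => A _.
rewrite -prodr_const (big_distr_big_dep set0) /= mulr_sumr.
apply: eq_big => [f|f /eqP <- //].
apply/eqP/pfamilyP => [<- | [Hs Hin]].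
  split; first by apply/subsetP => a; rewrite !inE.
  by move=> a; rewrite inE.
apply/setP => a; rewrite inE.
case: (boolP (a \in A)) => Ha; first by have := Hin a Ha.
apply/negbTE/negP => Hf; move/subsetP: Hs => /(_ a).
by rewrite inE Hf (negbTE Ha) => /(_ isT).
Qed.

Lemma sum_sets_card (R : comPzRingType) k (g : nat -> R) :
  \sum_(S : {set 'I_k}) g #|S| = \sum_(j < k.+1) g j *+ 'C(k, j).
Proof.
transitivity (\sum_(S : {set 'I_k}) \sum_(j < k.+1 | #|S| == j) g j).
  apply: eq_bigr => S _.
  have HS : (#|S| < k.+1)%N by rewrite ltnS -[X in (_ <= X)%N](card_ord k) max_card.
  rewrite (big_pred1 (Ordinal HS)) // => j /=.
rewrite (exchange_big_dep xpredT) //=.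
apply: eq_bigr => j _; rewrite sumr_const.
congr (_ *+ _); rewrite -[X in 'C(X, _)](card_ord k) -card_draws.
by apply: eq_card => S; rewrite inE.
Qed.

Lemma sum_nonempty (R : comPzRingType) k (phi : nat -> R) :
  \sum_(S : {set 'I_k} | S != set0) phi #|S| = \sum_(j < k) phi j.+1 *+ 'C(k, j.+1).
Proof.
apply: (@addrI _ (phi 0%N)).
have := @sum_sets_card R k phi.
rewrite (bigD1 set0) //= cards0 big_ord_recl /= bin0 mulr1n => ->.
by congr (_ + _); apply: eq_bigr => i _; rewrite lift0.
Qed.

Lemma sum_binom_shift (R : comPzRingType) (z : R) k :
  \sum_(j < k) z ^+ j *+ 'C(k, j.+1) = \sum_(i < k) (1 + z) ^+ i.
Proof.
elim: k => [|k IH]; first by rewrite !big_ord0.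
rewrite [RHS]big_ord_recr /= -IH.
under eq_bigr => j _ do rewrite binS mulrnDr.
rewrite big_split /= -exprD1n [(1 + z)]addrC; congr (_ + _).
by rewrite big_ord_recr /= bin_small // mulr0n addr0.
Qed.

Lemma rk_le (T : finType) (e : rel T) (A : {set T}) : (rk e A <= #|A|)%N.
Proof. exact: rank_leq_row. Qed.

Lemma sum_supp (T : finType) k (f : {ffun T -> {set 'I_k}}) (G : nat -> nat) :
  G 0%N = 0%N -> (\sum_a G #|f a| = \sum_(a in supp f) G #|f a|)%N.
Proof.
move=> G0; rewrite (bigID (mem (supp f))) /= [X in (_ + X)%N]big1 ?addn0 //.
by move=> a; rewrite inE negbK => /eqP ->; rewrite cards0.
Qed.

Theorem mainTheorem4 (T : finType) (e : rel T) (e_sym : symmetric e)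
    (k : nat) (k_pos : (0 < k)%N) (R : comPzRingType) (u x y : R) :
  Pgraph (clone e k) u x = Pgraph e u ((1 + x) ^+ k - 1) /\
  qgraph (clone e k) x y =
    qgraph e ((x - 1) * (\sum_(i < k) y ^+ i) + 1) (y ^+ k).
Proof.
split.
  rewrite /Pgraph reindex_sets.
  transitivity (\sum_(f : {ffun T -> {set 'I_k}})
     u ^+ rk e (supp f) * \prod_(a in supp f) x ^+ #|f a|).
    apply: eq_bigr => f _; rewrite rk_clone mulrC card_toSet (@sum_supp _ _ _ id) //.
    by rewrite expr_sum.
  rewrite (@sum_clone _ _ k (fun A => u ^+ rk e A) (fun n => x ^+ n)).
  have -> : \sum_(S : {set 'I_k} | S != set0) x ^+ #|S| = (1 + x) ^+ k - 1.
    rewrite sum_nonempty [1 + x]addrC exprD1n big_ord_recl /= expr0 bin0 mulr1n [1 + _]addrC addrK.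
    by apply: eq_bigr => i _; rewrite /bump.
  by apply: eq_bigr => A _; rewrite mulrC.
rewrite /qgraph reindex_sets.
set c := \sum_(i < k) y ^+ i.
transitivity (\sum_(f : {ffun T -> {set 'I_k}})
   ((x - 1) ^+ rk e (supp f) * (y - 1) ^+ (#|supp f| - rk e (supp f)))
     * \prod_(a in supp f) (y - 1) ^+ (#|f a| - 1)).
  apply: eq_bigr => f _; rewrite rk_clone card_toSet (@sum_supp _ _ _ id) //.
  rewrite prodrXr -mulrA -exprD; congr (_ * _ ^+ _).
  have -> : (\sum_(a in supp f) #|f a| = \sum_(a in supp f) (#|f a| - 1) + #|supp f|)%N.
    rewrite -sum1_card -big_split /=; apply: eq_bigr => a; rewrite inE => Ha.
    by rewrite subnK // card_gt0.
  by rewrite -addnBA ?rk_le // addnC.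
rewrite (@sum_clone _ _ k (fun A => (x - 1) ^+ rk e A * (y - 1) ^+ (#|A| - rk e A))
                   (fun n => (y - 1) ^+ (n - 1))).
have -> : \sum_(S : {set 'I_k} | S != set0) (y - 1) ^+ (#|S| - 1) = c.
  rewrite (@sum_nonempty _ k (fun n => (y - 1) ^+ (n - 1))).
  under eq_bigr => j _ do rewrite subn1 /=.
  by rewrite sum_binom_shift addrC subrK.
apply: eq_bigr => A _.
rewrite addrK subrX1 -/c !exprMn. rewrite -[X in c ^+ X](subnKC (rk_le e A)) exprD.
by rewrite mulrACA.
Qed.
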